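(* Let $i\ge0$, $l\ge1$, $j\ge0$, $j_1,\ldots,j_l\ge0$ and $k\ge0$ be integers. Then (a) $\displaystyle b_{i,j_1+\cdots+j_l,k}=\sum\binom{i}{i_1,\ldots,i_{l+k}}\prod_{r=1}^{l}b_{i_r,j_r,0}$, the sum being over all integers $i_1,\ldots,i_{l+k}\ge0$ with $i_1+\cdots+i_{l+k}=i$; (b) $\displaystyle b_{i,j,k}=\sum\binom{i}{i_1,\ldots,i_{j+k}}$, the sum being over all integers $i_1,\ldots,i_{j+k}\ge0$ with $i_1+\cdots+i_{j+k}=i$ and $i_1>0,\ldots,i_j>0$.
   Context: For integers $i\ge0$, $j\ge0$ and real $k$, $b_{i,j,k}=\sum_{r=0}^{j}\binom{j}{r}(-1)^{j-r}(r+k)^i$, with the convention $0^0=1$. $\binom{i}{i_1,\ldots,i_n}=\frac{i!}{i_1!\cdots i_n!}$ is the multinomial coefficient. *)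

(* Defs.v *)
From HB Require Import structures.
From mathcomp Require Import all_boot all_order all_algebra.
From mathcomp Require Import reals.
Set Implicit Arguments. Unset Strict Implicit. Unset Printing Implicit Defensive.
Import Order.TTheory GRing.Theory Num.Theory.
Local Open Scope ring_scope.

(* b_{i,j,k} = \sum_{r=0}^{j} C(j,r) (-1)^{j-r} (r+k)^i, with 0^0 = 1
   (automatic for x ^+ 0 = 1). *)
Definition bcoef (R : realType) (i j : nat) (k : R) : R :=
  \sum_(r < j.+1) ('C(j, r))%:R * (-1) ^+ (j - r) * (r%:R + k) ^+ i.

Definition multinom (i n : nat) (t : 'I_n -> nat) : nat :=
  (i`! %/ \prod_(r < n) (t r)`!)%N.

(* Main.v *)
Require Import Defs.
From HB Require Import structures.
From mathcomp Require Import all_boot all_order all_algebra.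
From mathcomp Require Import reals ring.
Set Implicit Arguments. Unset Strict Implicit. Unset Printing Implicit Defensive.
Import Order.TTheory GRing.Theory Num.Theory.
Local Open Scope ring_scope.

Section S.
Variable R : realType.

Lemma bcoef_j0 m (k : R) : bcoef m 0 k = k ^+ m.
Proof. by rewrite /bcoef big_ord1 /= bin0 mul1r expr0 mul1r add0r. Qed.

Lemma bcoef_pascal m j (k : R) :
  bcoef m j.+1 k = bcoef m j (k + 1) - bcoef m j k.
Proof.
rewrite /bcoef big_ord_recl /= bin0 subn0.
under eq_bigr => r _ do rewrite /bump /= add1n binS natrD !mulrDl.
rewrite big_split /= [X in _ + X]addrC addrCA; congr (_ + _).
  by apply: eq_bigr => r _; rewrite subSS -natr1 -addrA [1 + k]addrC.
rewrite big_ord_recr /= bin_small // !mul0r addr0.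
rewrite [in RHS]big_ord_recl /= bin0 subn0 opprD -sumrN; congr (_ + _).
  by rewrite exprS !mulN1r !mul1r add0r mulNr.
apply: eq_bigr => r _; rewrite /bump /= add1n subSS.
have hr : (r < j)%N by [].
by rewrite -(subnSK hr) exprS; ring.
Qed.

Definition conv (a b : nat -> R) (m : nat) : R :=
  \sum_(p < m.+1) 'C(m, p)%:R * a p * b (m - p)%N.

Lemma conv_subl a a1 a2 b m : (forall s, a s = a1 s - a2 s) ->
  conv a b m = conv a1 b m - conv a2 b m.
Proof. by move=> H; rewrite /conv -sumrB; apply: eq_bigr => p _; rewrite H; ring. Qed.

Lemma conv_subr a b b1 b2 m : (forall s, b s = b1 s - b2 s) ->
  conv a b m = conv a b1 m - conv a b2 m.
Proof. by move=> H; rewrite /conv -sumrB; apply: eq_bigr => p _; rewrite H; ring. Qed.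

Lemma conv_b j1 j2 (k1 k2 : R) m :
  conv (fun s => bcoef s j1 k1) (fun s => bcoef s j2 k2) m = bcoef m (j1 + j2) (k1 + k2).
Proof.
elim: j1 k1 => [|j1 IH] k1.
  elim: j2 k2 => [|j2 IH] k2.
    rewrite /conv bcoef_j0 addrC exprDn; apply: eq_bigr => p _.
    by rewrite !bcoef_j0 -mulr_natl; ring.
  rewrite (conv_subr _ _ (fun s => bcoef_pascal s j2 k2)) !IH add0n bcoef_pascal.
  by rewrite addrA.
rewrite (conv_subl _ _ (fun s => bcoef_pascal s j1 k1)) !IH addSn bcoef_pascal.
by rewrite addrAC.
Qed.

Definition Pn (N : nat) (a : nat -> R) : {poly R} := \poly_(s < N.+1) (a s / (s`!)%:R).
Definition eqt (N : nat) (p q : {poly R}) := forall m, (m <= N)%N -> p`_m = q`_m.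

Lemma eqtM N p p' q q' : eqt N p p' -> eqt N q q' -> eqt N (p * q) (p' * q').
Proof.
move=> Hp Hq m hm; rewrite !coefM; apply: eq_bigr => s _.
have hs : (s <= m)%N by rewrite -ltnS.
rewrite Hp ?Hq //; [exact: leq_trans (leq_subr _ _) hm | exact: leq_trans hs hm].
Qed.

Lemma eqt_trans N p q r : eqt N p q -> eqt N q r -> eqt N p r.
Proof. by move=> H1 H2 m hm; rewrite H1 ?H2. Qed.

Lemma fact_neq0 n : (n`!)%:R != 0 :> R.
Proof. by rewrite pnatr_eq0 -lt0n fact_gt0. Qed.

Lemma PnM N a b : eqt N (Pn N a * Pn N b) (Pn N (conv a b)).
Proof.
move=> m hm; rewrite coefM coef_poly ltnS hm /conv mulr_suml.
apply: eq_bigr => p _.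
have hp : (p <= m)%N by rewrite -ltnS.
rewrite !coef_poly ltnS (leq_trans hp hm) ltnS (leq_trans (leq_subr _ _) hm).
rewrite -(bin_fact hp) !natrM.
have h1 := fact_neq0 p; have h2 := fact_neq0 (m - p).
have h3 : ('C(m, p))%:R != 0 :> R by rewrite pnatr_eq0 -lt0n bin_gt0.
by field; rewrite h1 h2 h3.
Qed.

Lemma Pn_ext N a b : (forall s, a s = b s) -> Pn N a = Pn N b.
Proof. by move=> H; apply: eq_poly => s _; rewrite H. Qed.

Lemma prodP N n (jj kk : 'I_n -> nat) :
  eqt N (\prod_(r < n) Pn N (fun s => bcoef s (jj r) (kk r)%:R))
        (Pn N (fun s => bcoef s (\sum_(r < n) jj r) (\sum_(r < n) kk r)%:R)).
Proof.
elim: n jj kk => [|n IH] jj kk.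
  rewrite !big_ord0 => m hm; rewrite coef_poly ltnS hm bcoef_j0 coefC.
  by case: m hm => [|m] _; rewrite ?expr0 ?divr1 ?fact0 // expr0n mul0r.
rewrite big_ord_recr /= (big_ord_recr n jj) (big_ord_recr n kk) /=.
apply: eqt_trans; first apply: eqtM; first exact: IH.
  by move=> m _.
apply: eqt_trans; first exact: PnM.
by rewrite (Pn_ext _ (fun s => conv_b _ _ _ _ s)) natrD => m _.
Qed.

Lemma coef_prodP N n (a : 'I_n -> nat -> R) :
  (\prod_(r < n) Pn N (a r))`_N =
  \sum_(t : {ffun 'I_n -> 'I_N.+1} | (\sum_(r < n) (t r : nat))%N == N)
     \prod_(r < n) (a r (t r) / ((t r)`!)%:R).
Proof.
rewrite /Pn.
under eq_bigr => r _ do rewrite poly_def.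
rewrite bigA_distr_bigA /= coef_sum [RHS]big_mkcond /=; apply: eq_bigr => t _.
under eq_bigr => r _ do rewrite -mul_polyC.
rewrite big_split /= -rmorph_prod prodrXr mul_polyC coefZ coefXn.
by rewrite eq_sym; case: eqP; rewrite ?mulr1 ?mulr0.
Qed.

Lemma dvd_fact_prod n (f : 'I_n -> nat) :
  (\prod_(r < n) (f r)`! %| (\sum_(r < n) f r)`!)%N.
Proof.
elim: n f => [|n IH] f; first by rewrite !big_ord0.
rewrite !big_ord_recr /=.
set S := (\sum_(i < n) f (widen_ord (leqnSn n) i))%N.
have := bin_fact (leq_addl S (f ord_max)); rewrite addnK => <-.
by rewrite mulnC dvdn_mull // dvdn_mul.

Qed.

Lemma main_gen N n (jj kk : 'I_n -> nat) :
  bcoef N (\sum_(r < n) jj r)%N ((\sum_(r < n) kk r)%N%:R : R) =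
  \sum_(t : {ffun 'I_n -> 'I_N.+1} | (\sum_(r < n) (t r : nat))%N == N)
     (multinom N (fun r => (t r : nat)))%:R *
     \prod_(r < n) bcoef (t r) (jj r) (kk r)%:R.
Proof.
have := prodP (N:=N) jj kk (leqnn N).
rewrite coef_prodP coef_poly ltnSn => H.
have hN := fact_neq0 N.
rewrite -[LHS](divfK hN) -H mulr_suml; apply: eq_bigr => t /eqP ht.
rewrite prodf_div /multinom natf_div; last by have := dvd_fact_prod (fun r => (t r : nat)); rewrite ht.
rewrite natr_prod; field.
rewrite -natr_prod pnatr_eq0 -lt0n; apply/prodn_gt0 => r; exact: fact_gt0.
Qed.

Lemma split_l m n (x : 'I_m) : split (lshift n x) = inl x.
Proof. exact: (unsplitK (inl _ x)). Qed.
Lemma split_r m n (x : 'I_n) : split (rshift m x) = inr x.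
Proof. exact: (unsplitK (inr _ x)). Qed.

Lemma bcoef01 s : bcoef s 0 (1 : R) = 1.
Proof. by rewrite bcoef_j0 expr1n. Qed.

Lemma bcoef10 s : bcoef s 1 (0 : R) = ((0 < s)%N)%:R.
Proof.
rewrite /bcoef !big_ord_recr big_ord0 /= !addr0 add0r.
case: s => [|s]; rewrite ?expr0 ?expr0n /=; rewrite ?bin0 ?bin1 /= subn0 expr1 ?expr1n; ring.
Qed.
End S.

Theorem mainTheorem19 (R : realType) (i l j : nat) (js : 'I_l -> nat) (k : nat) :
  (1 <= l)%N ->
  (* (a) *)
  (bcoef i (\sum_(r < l) js r)%N (k%:R : R) =
     \sum_(t : {ffun 'I_(l + k) -> 'I_i.+1} | (\sum_(r < l + k) (t r : nat))%N == i)
        (multinom i (fun r => (t r : nat)))%:R *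
        \prod_(r < l) bcoef (t (lshift k r)) (js r) (0 : R))
  /\
  (* (b) *)
  (bcoef i j (k%:R : R) =
     \sum_(t : {ffun 'I_(j + k) -> 'I_i.+1} |
             ((\sum_(r < j + k) (t r : nat))%N == i) &&
             [forall r : 'I_j, (0 < t (lshift k r))%N])
        (multinom i (fun r => (t r : nat)))%:R).
Proof.
move=> _; split.
  pose jj (r : 'I_(l + k)) := match split r with inl x => js x | inr _ => 0%N end.
  pose kk (r : 'I_(l + k)) := match split r with inl _ => 0%N | inr _ => 1%N end.
  have E := main_gen R i jj kk.
  have Hj : (\sum_(r < l + k) jj r)%N = (\sum_(r < l) js r)%N.
    rewrite big_split_ord /= [X in (_ + X)%N]big1 ?addn0; last by move=> r _; rewrite /jj (@split_r l k r).
    by apply: eq_bigr => r _; rewrite /jj (@split_l l k r).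
  have Hk : (\sum_(r < l + k) kk r)%N = k.
    rewrite big_split_ord /= big1 ?add0n; last by move=> r _; rewrite /kk (@split_l l k r).
    under eq_bigr => r _ do rewrite /kk (@split_r l k r).
    by rewrite sum_nat_const card_ord muln1.
  rewrite Hj Hk in E; rewrite E; apply: eq_bigr => t _; congr (_ * _).
  rewrite big_split_ord /= [X in _ * X]big1 ?mulr1; last by move=> r _; rewrite /jj /kk (@split_r l k r) bcoef01.
  by apply: eq_bigr => r _; rewrite /jj /kk (@split_l l k r).
pose jj (r : 'I_(j + k)) := match split r with inl x => 1%N | inr _ => 0%N end.
pose kk (r : 'I_(j + k)) := match split r with inl _ => 0%N | inr _ => 1%N end.
have E := main_gen R i jj kk.
have Hj : (\sum_(r < j + k) jj r)%N = j.
  rewrite big_split_ord /= [X in (_ + X)%N]big1 ?addn0; last by move=> r _; rewrite /jj (@split_r j k r).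
  under eq_bigr => r _ do rewrite /jj (@split_l j k r).
  by rewrite sum_nat_const card_ord muln1.
have Hk : (\sum_(r < j + k) kk r)%N = k.
  rewrite big_split_ord /= big1 ?add0n; last by move=> r _; rewrite /kk (@split_l j k r).
  under eq_bigr => r _ do rewrite /kk (@split_r j k r).
  by rewrite sum_nat_const card_ord muln1.
rewrite Hj Hk in E; rewrite E big_mkcondr; apply: eq_bigr => t _.
rewrite big_split_ord /= [X in _ * (_ * X)]big1 ?mulr1; last by move=> r _; rewrite /jj /kk (@split_r j k r) bcoef01.
under eq_bigr => r _ do rewrite /jj /kk (@split_l j k r) bcoef10.
case: (boolP [forall r : 'I_j, (0 < t (lshift k r))%N]) => [/forallP H|].
  by rewrite big1 ?mulr1 // => r _; rewrite H.
rewrite negb_forall => /existsP [r Hr].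
by rewrite (bigD1 r) //= (negbTE Hr) mul0r mulr0.
Qed.
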